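(* Let $S$ be a numerical semigroup with conductor $c$, let $m\ge 2c-1$ and let $r$ be a positive integer. Then among the optimal configurations of cardinality $r$ there is one which is an $(S,m,r)$-amenable set.
   Context: A numerical semigroup is a submonoid of $\mathbb N$ with finite complement; its conductor $c$ is the least element of $S$ such that $c+n\in S$ for all $n\in\mathbb N$. For $x\in S$, $\mathrm D(x)=\{\alpha\in S\mid x-\alpha\in S\}$, and for $M\subseteq S$, $\mathrm D(M)=\bigcup_{x\in M}\mathrm D(x)$. For $m\in S$, $\delta^r(m)=\min\{\sharp\mathrm D(\{m_1,\ldots,m_r\})\mid m\le m_1<\cdots<m_r,\ m_i\in S\}$. A configuration is a finite subset of $S\cap[m,\infty)$; a configuration $M$ of cardinality $r$ is optimal if $\sharp\mathrm D(M)=\delta^r(m)$. A set $M=\{m_1<\cdots<m_r\}\subseteq S$ with $2c-1\le m=m_1$ is $(S,m,r)$-amenable if $\mathrm D(m_i)\cap[m,\infty)\subseteq M$ for all $i\in\{1,\ldots,r\}$. *)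

(* Defs.v *)
From mathcomp Require Import all_boot.
Set Implicit Arguments. Unset Strict Implicit. Unset Printing Implicit Defensive.

Definition numerical_semigroup (S : pred nat) : Prop :=
  [/\ 0 \in S,
      (forall x y, x \in S -> y \in S -> x + y \in S) &
      exists N, forall n, N <= n -> n \in S].

Definition is_conductor (S : pred nat) (c : nat) : Prop :=
  [/\ c \in S, (forall n, c + n \in S) &
      forall c', c' \in S -> (forall n, c' + n \in S) -> c <= c'].

(* alpha \in D(x) : alpha in S and x - alpha in S (as an integer, so alpha <= x) *)
Definition inD (S : pred nat) (x a : nat) : bool :=
  [&& a \in S, a <= x & (x - a) \in S].

Definition inDset (S : pred nat) (M : seq nat) (a : nat) : bool :=
  has (fun x => inD S x a) M.

(* #D(M): all elements of D(M) are <= max M, so counting over [0, max M] *)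
Definition cardD (S : pred nat) (M : seq nat) : nat :=
  count (inDset S M) (iota 0 (\max_(x <- M) x).+1).

Definition config (S : pred nat) (m r : nat) (M : seq nat) : Prop :=
  [/\ uniq M, size M = r & forall x, x \in M -> (x \in S) && (m <= x)].

(* optimal: #D(M) = delta^r(m), i.e. #D(M) is minimal among configurations *)
Definition optimal (S : pred nat) (m r : nat) (M : seq nat) : Prop :=
  config S m r M /\
  forall M', config S m r M' -> cardD S M <= cardD S M'.

Definition amenable (S : pred nat) (c m r : nat) (M : seq nat) : Prop :=
  [/\ config S m r M,
      m \in M,
      2 * c - 1 <= m &
      forall x a, x \in M -> inD S x a -> m <= a -> a \in M].

(* Main.v *)
Require Import Defs.
From mathcomp Require Import all_boot.
From mathcomp Require Import zify.
From Stdlib Require Import Classical.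
Set Implicit Arguments. Unset Strict Implicit.

Lemma le_max x (M : seq nat) : x \in M -> x <= \max_(y <- M) y.
Proof. by move=> H; apply: (@leq_bigmax_seq _ M xpredT (fun y => y) x H). Qed.

Lemma inDset_le S M a : inDset S M a -> a <= \max_(y <- M) y.
Proof.
move/hasP=> [x xM /and3P[_ ax _]]; exact: leq_trans ax (le_max xM).
Qed.

Lemma cardD_inj S N M (f : nat -> nat) :
  injective f -> (forall a, inDset S N a -> inDset S M (f a)) ->
  cardD S N <= cardD S M.
Proof.
rewrite /cardD -!size_filter => finj H.
rewrite -(size_map f); apply: uniq_leq_size.
  by rewrite map_inj_uniq // filter_uniq // iota_uniq.
move=> y /mapP[a]; rewrite mem_filter => /andP[Ha _] ->.
rewrite mem_filter H // mem_iota add0n ltnS; exact: inDset_le (H a Ha).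
Qed.

Lemma inD_trans S (Sadd : forall x y, x \in S -> y \in S -> x + y \in S) y x a :
  inD S y x -> inD S x a -> inD S y a.
Proof.
move=> /and3P[xS xy yx] /and3P[aS ax xa]; apply/and3P; split => //.
  exact: leq_trans ax xy.
have -> : y - a = (y - x) + (x - a) by lia.
exact: Sadd.
Qed.

Theorem proposition3p7 (S : pred nat) (c m r : nat) :
  numerical_semigroup S -> is_conductor S c ->
  2 * c - 1 <= m -> 0 < r ->
  exists M : seq nat, optimal S m r M /\ amenable S c m r M.
Proof.
move=> [S0 Sadd _] [Sc Scn _] hm hr.
case: r hr => // r' _.
have inS : forall n, c <= n -> n \in S.
  by move=> n h; rewrite -(subnKC h) Scn.
have cm : c <= m by lia.
have exopt : exists M, optimal S m r'.+1 M.
  suff H : forall n M, config S m r'.+1 M -> cardD S M <= n -> exists M0, optimal S m r'.+1 M0.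
    apply: (H _ (iota m r'.+1)) => //; split; first exact: iota_uniq.
      exact: size_iota.
    move=> x; rewrite mem_iota => /andP[h1 _]; rewrite h1 andbT inS //; lia.
  elim=> [|n IH] M cM hn.
    exists M; split => // M' _; lia.
  case: (classic (forall M', config S m r'.+1 M' -> cardD S M <= cardD S M')) => Hc.
    by exists M.
  have [M' HM'] := not_all_ex_not _ _ Hc.
  have [cM' hlt] := imply_to_and _ _ HM'.
  apply: (IH M' cM'); lia.
have [M [[Mu Ms Mel] Mopt]] := exopt.
have [x0 x0M] : exists x0, x0 \in M.
  by case: M Mu Ms Mel Mopt => // x0 s *; exists x0; rewrite inE eqxx.
case: (ex_minnP (ex_intro (fun n => n \in M) x0 x0M)) => n0 n0M n0min.
have Mge : forall x, x \in M -> m <= x by move=> x /Mel /andP[].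
have n0m : m <= n0 by exact: Mge.
set t := n0 - m.
set M' := map (fun x => x - t) M.
have M'u : uniq M'.
  rewrite map_inj_in_uniq // => x y xM yM /=.
  have := n0min _ xM; have := n0min _ yM; lia.
have M's : size M' = r'.+1 by rewrite size_map.
have M'el : forall x, x \in M' -> (x \in S) && (m <= x).
  move=> x /mapP[y yM ->]; have := n0min _ yM => h.
  have h2 : m <= y - t by rewrite /t; lia.
  by rewrite h2 andbT inS //; lia.
have mM' : m \in M'.
  apply/mapP; exists n0 => //; rewrite /t; lia.
have cfM' : config S m r'.+1 M' by [].
have le1 : cardD S M' <= cardD S M.
  apply: (cardD_inj (f := fun a => if a < c then a else a + t)).
    move=> a b /=; case: (ltnP a c); case: (ltnP b c); lia.
  move=> a /hasP[y /mapP[x xM ->] /and3P[aS ax xa]].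
  apply/hasP; exists x => //; have := Mge _ xM => hx.
  have hxt : t <= x by rewrite /t; have := n0min _ xM; lia.
  case: ltnP => hac.
    apply/and3P; split; [exact: aS | lia | apply: inS; lia].
  apply/and3P; split; [apply: inS; lia | lia | ].
  by have -> : x - (a + t) = x - t - a by lia.
have M'opt : forall M'', config S m r'.+1 M'' -> cardD S M' <= cardD S M''.
  by move=> M'' h; exact: leq_trans le1 (Mopt _ h).
set K := \max_(y <- M') y.
have mK : m <= K by exact: le_max.
set C := [seq a <- iota m (K - m).+1 | inDset S M' a].
have inDxx : forall x, x \in S -> inD S x x.
  by move=> x xS; apply/and3P; split => //; rewrite subnn.
have memC : forall a, a \in C = (m <= a <= K) && inDset S M' a.
  move=> a; rewrite mem_filter mem_iota andbC; congr (_ && _).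
  apply/idP/idP => /andP[h1 h2]; rewrite h1 /=; lia.
have CM' : {subset M' <= C}.
  move=> x xM; rewrite memC le_max // andbT.
  have /andP[xS ->] := M'el _ xM; apply/hasP; exists x => //; exact: inDxx.
have Cu : uniq C by rewrite filter_uniq // iota_uniq.
have Csz : r'.+1 <= size C by rewrite -M's; exact: uniq_leq_size.
have Csort : sorted ltn C.
  by apply: sorted_filter; [exact: ltn_trans | exact: iota_ltn_sorted].
have mC : m \in C.
  rewrite memC leqnn mK /=; apply/hasP; exists m => //; apply: inDxx; exact: inS.
set Nn := take r'.+1 C.
have NC : {subset Nn <= C} by move=> x; exact: mem_take.
have Nel : forall x, x \in Nn -> (x \in S) && (m <= x).
  move=> x /NC; rewrite memC => /andP[/andP[h _] _]; rewrite h andbT inS //; lia.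
have cfN : config S m r'.+1 Nn.
  split; [exact: take_uniq | exact: size_takel | exact: Nel].
have NsubD : forall a, inDset S Nn a -> inDset S M' a.
  move=> a /hasP[x /NC]; rewrite memC => /andP[_ /hasP[y yM Dyx]] Dxa.
  apply/hasP; exists y => //; exact: (inD_trans Sadd Dyx Dxa).
exists Nn; split.
  split => // M'' h; apply: leq_trans (M'opt _ h).
  exact: (cardD_inj (f := id)).
split => //.
- rewrite in_take //.
  have -> : index m C = 0.
    rewrite /C /=. have -> : inDset S M' m.
      by apply/hasP; exists m => //; apply: inDxx; exact: inS.
    by rewrite /= eqxx.
  by [].
- move=> x a xN Dxa ma.
  have xC := NC _ xN.
  have aC : a \in C.
    rewrite memC ma /=.
    move: xC; rewrite memC => /andP[/andP[_ xK] /hasP[y yM Dyx]].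
    have /and3P[_ ax _] := Dxa.
    rewrite (leq_trans ax xK) /=; apply/hasP; exists y => //.
    exact: (inD_trans Sadd Dyx Dxa).
  rewrite in_take //; move: xN; rewrite in_take // => hx.
  case: (leqP (index a C) (index x C)) => h; first exact: leq_ltn_trans h hx.
  have := @sorted_ltn_index _ ltn ltn_trans C Csort x a xC aC h.
  move=> xa; have /and3P[_ ax _] := Dxa; have xa2 : x < a := xa; by rewrite ltnNge ax in xa2.
Qed.
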